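(* Let $L\subset\mathbb{R}^n$ be an $n$-dimensional lattice with basis $b_1,\dots,b_n$, and let $P$ be a Delaunay polytope of $L$ with vertex set $V(P)$ that generates $L$ (i.e. $L$ is the lattice generated by the differences of vertices of $P$). Fix a vertex $v_0\in V(P)$ and, for each $v\in V(P)$, write $v-v_0=\sum_{i=1}^n z_i(v)b_i$ with $z_i(v)\in\mathbb{Z}$. Let $$Y(P)=\Big\{y\in\mathbb{Z}^{V(P)}:\ \sum_{v\in V(P)}y(v)v=0,\ \sum_{v\in V(P)}y(v)=0\Big\}$$ and let $\mathcal{B}(P)$ be the linear space of symmetric real $n\times n$ matrices $(b_{ij})$ satisfying $$\sum_{i,j=1}^n\Big(\sum_{v\in V(P)}y(v)z_i(v)z_j(v)\Big)b_{ij}=0\qquad\text{for all }y\in Y(P).$$ Then $\dim\mathcal{B}(P)$ equals the rank of $P$.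
   Context: A Delaunay polytope of a lattice $L\subset\mathbb{R}^n$ is a polytope whose vertex set is $L\cap S$, where $S=S(c,r)$ is an empty sphere: $\|a-c\|^2\ge r^2$ for all $a\in L$, and $S\cap L$ contains $n+1$ affinely independent points. For a finite set $V$, the hypermetric cone $HYP(V)$ is the set of functions $d:V\times V\to\mathbb{R}$ with $d(u,v)=d(v,u)$, $d(v,v)=0$, and $\sum_{u,v\in V}b_ub_v d(u,v)\le 0$ for all $b\in\mathbb{Z}^V$ with $\sum_v b_v=1$. For a Delaunay polytope $P$, the distance $d_P(u,v)=\|u-v\|^2$ on $V=V(P)$ lies in $HYP(V)$; the rank of $P$ is the dimension of the minimal (by inclusion) face of $HYP(V(P))$ containing $d_P$. *)

(* Defs.v *)
From HB Require Import structures.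
From mathcomp Require Import all_boot all_order all_algebra.
From mathcomp Require Import reals.
Set Implicit Arguments. Unset Strict Implicit. Unset Printing Implicit Defensive.
Import Order.TTheory GRing.Theory Num.Theory.
Local Open Scope ring_scope.

Section Defs.
Variable R : realType.

Definition sqnorm n (x : 'rV[R]_n) : R := \sum_(i < n) x 0 i ^+ 2.

Definition lattice n (B : 'M[R]_n) (x : 'rV[R]_n) : Prop :=
  exists z : 'I_n -> int, x = \sum_(i < n) (z i)%:~R *: row i B.

(* vtx : 'I_m -> R^n enumerates (injectively) the vertex set V(P) of a
   Delaunay polytope P of L: V(P) = L \cap S(c,r) for an empty sphere
   S(c,r) containing n+1 affinely independent lattice points. *)
Definition is_delaunay n (B : 'M[R]_n) m (vtx : 'I_m -> 'rV[R]_n) : Prop :=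
  injective vtx /\
  exists (c : 'rV[R]_n) (r : R),
    [/\ (forall a, lattice B a -> r ^+ 2 <= sqnorm (a - c)),
        (forall x, (lattice B x /\ sqnorm (x - c) = r ^+ 2) <->
                   exists k, vtx k = x) &
        (exists f : 'I_n.+1 -> 'I_m,
           \matrix_(i < n) (vtx (f (lift ord0 i)) - vtx (f ord0)) \in unitmx)].

Definition generates n (B : 'M[R]_n) m (vtx : 'I_m -> 'rV[R]_n) : Prop :=
  forall x, lattice B x <->
    exists a : 'I_m -> 'I_m -> int,
      x = \sum_(k < m) \sum_(l < m) (a k l)%:~R *: (vtx k - vtx l).

(* the hypermetric cone HYP(V), V = 'I_m, functions V x V -> R as matrices *)
Definition hyp m (d : 'M[R]_m) : Prop :=
  [/\ d^T = d, (forall u, d u u = 0) &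
      forall bb : 'I_m -> int, \sum_(u < m) bb u = 1 ->
        \sum_(u < m) \sum_(v < m) (bb u * bb v)%:~R * d u v <= 0].

Definition distP n m (vtx : 'I_m -> 'rV[R]_n) : 'M[R]_m :=
  \matrix_(u < m, v < m) sqnorm (vtx u - vtx v).

Definition convex_set (V : lmodType R) (F : V -> Prop) : Prop :=
  forall x y (t : R), F x -> F y -> 0 <= t <= 1 -> F (t *: x + (1 - t) *: y).

Definition is_face (V : lmodType R) (C F : V -> Prop) : Prop :=
  [/\ (forall x, F x -> C x), convex_set F &
      forall x y (t : R), C x -> C y -> 0 < t < 1 ->
        F (t *: x + (1 - t) *: y) -> F x /\ F y].

Definition min_face (V : lmodType R) (C : V -> Prop) (d : V) : V -> Prop :=
  fun x => forall F, is_face C F -> F d -> F x.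

Definition is_dim (V : vectType R) (S : V -> Prop) (k : nat) : Prop :=
  (exists s : seq V, [/\ (forall v, v \in s -> S v), size s = k & free s]) /\
  (forall s : seq V, (forall v, v \in s -> S v) -> free s -> (size s <= k)%N).

Definition inY n m (vtx : 'I_m -> 'rV[R]_n) (y : 'I_m -> int) : Prop :=
  \sum_(k < m) (y k)%:~R *: vtx k = 0 /\ \sum_(k < m) y k = 0.

(* b \in B(P), z k i = z_i(vtx k) *)
Definition Bspace n m (vtx : 'I_m -> 'rV[R]_n) (z : 'I_m -> 'I_n -> int)
    (b : 'M[R]_n) : Prop :=
  b^T = b /\
  forall y, inY vtx y ->
    \sum_(i < n) \sum_(j < n) (\sum_(k < m) (y k * z k i * z k j)%:~R) * b i j = 0.

End Defs.

(* Main.v *)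
Require Import Defs.
From HB Require Import structures.
From mathcomp Require Import all_boot all_order all_algebra.
From mathcomp Require Import reals.
From Stdlib Require Import Classical.
From mathcomp Require Import ring lra zify.
Import Order.TTheory GRing.Theory Num.Theory.
Local Open Scope ring_scope.

Lemma max_nat_exists (P : nat -> Prop) N :
  (exists k, P k) -> (forall k, P k -> (k <= N)%N) ->
  exists k, P k /\ forall j, P j -> (j <= k)%N.
Proof.
elim: N => [|N IH] [k Pk] hb.
  exists k; split=> // j /hb; rewrite leqn0 => /eqP ->; done.
case: (classic (P N.+1)) => [PN|nP].
  by exists N.+1; split.
apply: IH; first by exists k.
move=> j Pj; have := hb j Pj; rewrite leq_eqVlt => /orP[/eqP E|//].
by subst j.
Qed.

Lemma maxfree (R : realType) (V : vectType R) (S : V -> Prop) :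
  exists t : seq V, [/\ (forall v, v \in t -> S v), free t,
     (forall s, (forall v, v \in s -> S v) -> free s -> (size s <= size t)%N) &
     (forall v, S v -> v \in <<t>>%VS)].
Proof.
pose P k := exists t : seq V, [/\ (forall v, v \in t -> S v), free t & size t = k].
have [k [[t [tS ft st]] kmax]] : exists k, P k /\ forall j, P j -> (j <= k)%N.
  apply: (@max_nat_exists P (\dim (fullv : {vspace V}))).
    by exists 0%N, [::]; split=> //; rewrite nil_free.
  move=> k [t [_ ft <-]]; rewrite -(eqP ft); apply: dimvS; apply: subvf.
exists t; split=> //.
  move=> s sS fs; rewrite st; apply: kmax; by exists s.
move=> v Sv; apply/negPn/negP => nv.
have : P (size t).+1.
  exists (v :: t); split=> //.
    by move=> w; rewrite inE => /orP[/eqP->|/tS].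
  by rewrite free_cons nv ft.
by move/kmax; rewrite st ltnn.
Qed.

Section BfSec.
Variables (R : realType) (n : nat).
Implicit Types (M A : 'M[R]_n) (x y w : 'rV[R]_n).

Definition Bf M x y : R := (x *m M *m y^T) 0 0.

Lemma BfE M x y : Bf M x y = \sum_i \sum_j x 0 i * M i j * y 0 j.
Proof.
rewrite /Bf !mxE.
under eq_bigr do rewrite !mxE big_distrl /=.
by rewrite exchange_big.
Qed.

Lemma BfDl M x1 x2 y : Bf M (x1 + x2) y = Bf M x1 y + Bf M x2 y.
Proof. by rewrite /Bf !mulmxDl mxE. Qed.
Lemma BfZl M a x y : Bf M (a *: x) y = a * Bf M x y.
Proof. by rewrite /Bf -!scalemxAl mxE. Qed.
Lemma BfNl M x y : Bf M (- x) y = - Bf M x y.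
Proof. by rewrite -scaleN1r BfZl mulN1r. Qed.
Lemma BfBl M x1 x2 y : Bf M (x1 - x2) y = Bf M x1 y - Bf M x2 y.
Proof. by rewrite BfDl BfNl. Qed.
Lemma BfDr M x y1 y2 : Bf M x (y1 + y2) = Bf M x y1 + Bf M x y2.
Proof. by rewrite /Bf linearD /= mulmxDr mxE. Qed.
Lemma BfZr M a x y : Bf M x (a *: y) = a * Bf M x y.
Proof. by rewrite /Bf linearZ /= -scalemxAr mxE. Qed.
Lemma BfNr M x y : Bf M x (- y) = - Bf M x y.
Proof. by rewrite -scaleN1r BfZr mulN1r. Qed.
Lemma BfBr M x y1 y2 : Bf M x (y1 - y2) = Bf M x y1 - Bf M x y2.
Proof. by rewrite BfDr BfNr. Qed.
Lemma Bf0l M y : Bf M 0 y = 0.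
Proof. by rewrite /Bf !mul0mx mxE. Qed.
Lemma Bf0r M x : Bf M x 0 = 0.
Proof. by rewrite /Bf trmx0 mulmx0 mxE. Qed.

Lemma Bf_suml M (I : finType) (a : I -> R) (p : I -> 'rV[R]_n) y :
  Bf M (\sum_u a u *: p u) y = \sum_u a u * Bf M (p u) y.
Proof.
elim/big_rec2: _ => [|u s1 s2 _ <-]; first by rewrite Bf0l.
by rewrite BfDl BfZl.
Qed.
Lemma Bf_sumr M (I : finType) (a : I -> R) (p : I -> 'rV[R]_n) x :
  Bf M x (\sum_u a u *: p u) = \sum_u a u * Bf M x (p u).
Proof.
elim/big_rec2: _ => [|u s1 s2 _ <-]; first by rewrite Bf0r.
by rewrite BfDr BfZr.
Qed.

Lemma Bf_sym M x y : M^T = M -> Bf M x y = Bf M y x.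
Proof.
move=> sM; rewrite /Bf.
have E : forall (A : 'M[R]_1), A 0 0 = (A^T) 0 0 by move=> A; rewrite mxE.
rewrite E.
by rewrite !trmx_mul trmxK sM mulmxA.
Qed.

Lemma Bf_trM M x y : Bf M^T x y = Bf M y x.
Proof.
rewrite /Bf.
have E : forall (A : 'M[R]_1), A 0 0 = (A^T) 0 0 by move=> A; rewrite mxE.
by rewrite E !trmx_mul !trmxK mulmxA.
Qed.

Lemma BfMD M1 M2 x y : Bf (M1 + M2) x y = Bf M1 x y + Bf M2 x y.
Proof. by rewrite /Bf mulmxDr mulmxDl mxE. Qed.
Lemma BfMZ a M x y : Bf (a *: M) x y = a * Bf M x y.
Proof. by rewrite /Bf -scalemxAr -scalemxAl mxE. Qed.

Lemma sqnormBf x : sqnorm x = Bf 1%:M x x.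
Proof.
rewrite /sqnorm BfE; apply: eq_bigr => i _.
rewrite (bigD1 i) //= big1 ?addr0; first by rewrite mxE eqxx mulr1 expr2.
by move=> j /negPf ji; rewrite mxE eq_sym ji mulr0 mul0r.
Qed.

Lemma Bf_mul M A x y : Bf M (x *m A) (y *m A) = Bf (A *m M *m A^T) x y.
Proof. by rewrite /Bf trmx_mul !mulmxA. Qed.

Lemma BfBB M x y : M^T = M ->
  Bf M (x - y) (x - y) = Bf M x x + Bf M y y - 2 * Bf M x y.
Proof.
move=> sM; rewrite BfBl !BfBr (Bf_sym _ y x) //; ring.
Qed.

Lemma quad_sum M m (b : 'I_m -> R) (p : 'I_m -> 'rV[R]_n) : M^T = M ->
  \sum_u \sum_v b u * b v * Bf M (p u - p v) (p u - p v) =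
  2 * (\sum_v b v) * (\sum_u b u * Bf M (p u) (p u))
  - 2 * Bf M (\sum_u b u *: p u) (\sum_u b u *: p u).
Proof.
move=> sM.
transitivity (\sum_u \sum_v (b u * b v * Bf M (p u) (p u)
   + b v * b u * Bf M (p v) (p v) - 2 * (b u * (b v * Bf M (p u) (p v))))).
  apply: eq_bigr => u _; apply: eq_bigr => v _; rewrite BfBB //; ring.
have H1 : Bf M (\sum_u b u *: p u) (\sum_u b u *: p u) =
    \sum_u \sum_v b u * (b v * Bf M (p u) (p v)).
  by rewrite Bf_suml; apply: eq_bigr => u _; rewrite Bf_sumr mulr_sumr.
have H2 : \sum_u \sum_v b u * b v * Bf M (p u) (p u) =
    (\sum_v b v) * (\sum_u b u * Bf M (p u) (p u)).
  rewrite mulr_sumr; apply: eq_bigr => u _; rewrite mulr_suml.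
  by apply: eq_bigr => v _; ring.
have H3 : \sum_u \sum_v b v * b u * Bf M (p v) (p v) =
    (\sum_v b v) * (\sum_u b u * Bf M (p u) (p u)).
  by rewrite exchange_big /= -H2.
under eq_bigr do rewrite sumrB big_split /=.
rewrite sumrB big_split /= H2 H3 H1.
under [X in _ - X = _]eq_bigr do rewrite -mulr_sumr.
rewrite -mulr_sumr.
ring.
Qed.
End BfSec.
Arguments Bf {R n}.

Section Bound.
Variables (R : realType) (n : nat).

Lemma sqnorm_ge0 (x : 'rV[R]_n) : 0 <= sqnorm x.
Proof. by apply: sumr_ge0 => i _; apply: sqr_ge0. Qed.

Lemma coord_le (x : 'rV[R]_n) i : x 0 i ^+ 2 <= sqnorm x.
Proof.
rewrite /sqnorm (bigD1 i) //= lerDl; apply: sumr_ge0 => j _; exact: sqr_ge0.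
Qed.

Lemma abs_le1 (a : R) : `|a| <= 1 + a ^+ 2.
Proof.
have e := real_normK (num_real a); have := sqr_ge0 (`|a| - 1).
have := normr_ge0 a; nra.
Qed.

Lemma prod_le (a b S : R) : a ^+ 2 <= S -> b ^+ 2 <= S -> `|a * b| <= S.
Proof.
move=> ha hb; rewrite normrM.
have ea := real_normK (num_real a); have eb := real_normK (num_real b).
have := sqr_ge0 (`|a| - `|b|); nra.
Qed.

Lemma lin_bound (g : 'cV[R]_n) (x : 'rV[R]_n) :
  `|(x *m g) 0 0| <= (\sum_j `|g j 0|) * (1 + sqnorm x).
Proof.
rewrite mxE mulr_suml; apply: le_trans (ler_norm_sum _ _ _) _.
apply: ler_sum => j _; rewrite normrM mulrC; apply: ler_wpM2l => //.
apply: le_trans (abs_le1 _) _; rewrite lerD2l; exact: coord_le.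
Qed.

Lemma quad_bound (M : 'M[R]_n) x :
  `|Bf M x x| <= (\sum_i \sum_j `|M i j|) * sqnorm x.
Proof.
rewrite BfE mulr_suml; apply: le_trans (ler_norm_sum _ _ _) _.
apply: ler_sum => i _; rewrite mulr_suml; apply: le_trans (ler_norm_sum _ _ _) _.
apply: ler_sum => j _.
have -> : x 0 i * M i j * x 0 j = M i j * (x 0 i * x 0 j) by ring.
rewrite normrM; apply: ler_wpM2l => //; apply: prod_le; exact: coord_le.
Qed.

Lemma sqnormB_le (x y : 'rV[R]_n) : sqnorm (x - y) <= 2 * sqnorm x + 2 * sqnorm y.
Proof.
rewrite /sqnorm !mulr_sumr -big_split /=; apply: ler_sum => i _.
rewrite !mxE; have := sqr_ge0 (x 0 i + y 0 i); nra.
Qed.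

Definition rowv (zi : 'I_n -> int) : 'rV[R]_n := \row_i (zi i)%:~R.

Lemma fin_bound (g h : 'rV[R]_n -> R) (Cg Ch : R) :
  (forall zi, `|g (rowv zi)| <= Cg * (1 + sqnorm (rowv zi))) ->
  (forall zi, 0 <= h (rowv zi)) ->
  (forall zi, h (rowv zi) = 0 -> g (rowv zi) = 0) ->
  (forall zi, sqnorm (rowv zi) <= Ch * (1 + h (rowv zi))) ->
  exists2 eps, 0 < eps & forall zi, eps * `|g (rowv zi)| <= h (rowv zi).
Proof.
move=> hg hh0 hg0 hS.
pose z0 : 'I_n -> int := fun _ => 0.
have S0 : forall zi, 0 <= sqnorm (rowv zi) by move=> zi; exact: sqnorm_ge0.
have Cg0 : 0 <= Cg.
  have := hg z0; have := normr_ge0 (g (rowv z0)); have := S0 z0.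
  move=> s0 n0 h1; have : 0 <= Cg * (1 + sqnorm (rowv z0)) by apply: le_trans h1.
  by rewrite pmulr_lge0 //; lra.
have Ch0 : 0 <= Ch.
  have := hS z0; have := hh0 z0.
  have -> : sqnorm (rowv z0) = 0.
    by rewrite /sqnorm big1 // => i _; rewrite mxE expr0n.
  by move=> h0 h1; move: h1; rewrite pmulr_lge0 //; lra.
pose T := 2 * Ch + 1.
pose K := 4 * Cg * Ch.
have K0 : 0 <= K by rewrite /K; apply: mulr_ge0 => //; apply: mulr_ge0.
pose e1 := (K + 1)^-1.
have e10 : 0 < e1 by rewrite /e1 invr_gt0; lra.
have e1K : e1 * K <= 1.
  by rewrite /e1 mulrC -/(K / (K + 1)) ler_pdivrMr; lra.
have big_case : forall zi, T <= sqnorm (rowv zi) ->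
    e1 * `|g (rowv zi)| <= h (rowv zi).
  move=> zi hT; set S := sqnorm (rowv zi) in hT *.
  have h1 := hg zi; have h2 := hS zi; have h3 := hh0 zi; rewrite -/S in h1 h2.
  set H := h (rowv zi) in h2 h3 *; set G := `|g (rowv zi)| in h1 *.
  have s1 : 1 <= S by rewrite /T in hT; lra.
  have a1 : G <= 2 * Cg * S.
    have : Cg * (1 + S) <= Cg * (2 * S) by apply: ler_wpM2l => //; lra.
    lra.
  have a2 : S <= 2 * (Ch * H) by rewrite /T in hT; lra.
  have a3 : G <= K * H.
    apply: le_trans a1 _; rewrite /K.
    have : 2 * Cg * S <= 2 * Cg * (2 * (Ch * H)).
      by apply: ler_wpM2l => //; lra.
    move=> hh; apply: le_trans hh _; lra.
  have : e1 * G <= e1 * (K * H) by apply: ler_wpM2l => //; lra.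
  move=> hh; apply: le_trans hh _; rewrite mulrA.
  by rewrite -[X in _ <= X]mul1r; apply: ler_wpM2r.
pose N := Num.bound (1 + T).
have hN : 1 + T < N%:R by apply: archi_boundP; rewrite /T; lra.
pose zf (phi : {ffun 'I_n -> 'I_(2 * N).+1}) : 'I_n -> int :=
  fun i => (phi i : nat)%:Z - N%:Z.
pose F phi := h (rowv (zf phi)) / (1 + `|g (rowv (zf phi))|).
pose e2 := \big[Order.min/1]_(phi | 0 < h (rowv (zf phi))) F phi.
have e20 : 0 < e2.
  apply: lt_bigmin => // phi hp; rewrite /F divr_gt0 //.
  have := normr_ge0 (g (rowv (zf phi))); lra.
have small_case : forall zi, sqnorm (rowv zi) < T ->
    e2 * `|g (rowv zi)| <= h (rowv zi).
  move=> zi hT.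
  have [H0|Hpos] := eqVneq (h (rowv zi)) 0.
    by rewrite (hg0 zi H0) normr0 mulr0 H0.
  have Hp : 0 < h (rowv zi) by rewrite lt_def Hpos hh0.
  have bnd : forall i, (`|zi i| < N%:Z)%R.
    move=> i; rewrite -(ltr_int R).
    have := coord_le (rowv zi) i; rewrite mxE => hc.
    have := abs_le1 ((zi i)%:~R : R).
    have -> : `|(zi i)%:~R : R| = (`|zi i|%R)%:~R.
      by rewrite -intr_norm.
    move=> ha.
    have -> : ((N%:Z)%:~R : R) = N%:R by [].
    lra.
  pose phi : {ffun 'I_n -> 'I_(2 * N).+1} :=
    [ffun i => inord (absz (zi i + N%:Z))].
  have ephi : rowv (zf phi) = rowv zi.
    apply/rowP => i; rewrite !mxE /zf ffunE; have b := bnd i.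
    rewrite inordK; last by lia.
    by congr (_%:~R); lia.
  have : e2 <= F phi.
    by apply: bigmin_le_cond; rewrite ephi.
  rewrite /F ephi => hle.
  have G0 := normr_ge0 (g (rowv zi)).
  have : e2 * (1 + `|g (rowv zi)|) <= h (rowv zi).
    rewrite -ler_pdivlMr; last lra.
    exact: hle.
  have := ltW e20; nra.
exists (Order.min e1 e2); first by rewrite lt_min e10 e20.
move=> zi.
have G0 := normr_ge0 (g (rowv zi)).
have [hT|hT] := leP T (sqnorm (rowv zi)).
  apply: le_trans (big_case zi hT); apply: ler_wpM2r => //; by rewrite ge_min lexx.
apply: le_trans (small_case zi hT); apply: ler_wpM2r => //; by rewrite ge_min lexx orbT.
Qed.

End Bound.
Arguments sqnorm_ge0 {R n}.
Arguments coord_le {R n}.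
Arguments abs_le1 {R}.
Arguments prod_le {R}.
Arguments lin_bound {R n}.
Arguments quad_bound {R n}.
Arguments sqnormB_le {R n}.
Arguments rowv {R n}.
Arguments fin_bound {R n}.

Section Main.
Variables (R : realType) (n m : nat) (B : 'M[R]_n) (vtx : 'I_m -> 'rV[R]_n)
  (k0 : 'I_m) (z : 'I_m -> 'I_n -> int).
Hypothesis hB : B \in unitmx.
Hypothesis hz : forall k, vtx k - vtx k0 = \sum_(i < n) (z k i)%:~R *: row i B.
Variables (c : 'rV[R]_n) (r : R) (f : 'I_n.+1 -> 'I_m).
Hypothesis hempty : forall a, lattice B a -> r ^+ 2 <= sqnorm (a - c).
Hypothesis hvert : forall x, (lattice B x /\ sqnorm (x - c) = r ^+ 2) <->
  exists k, vtx k = x.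
Hypothesis hf : \matrix_(i < n) (vtx (f (lift ord0 i)) - vtx (f ord0)) \in unitmx.

Definition zr k : 'rV[R]_n := \row_i (z k i)%:~R.

Lemma vtxE k : vtx k = vtx k0 + zr k *m B.
Proof.
have E : zr k *m B = \sum_i (z k i)%:~R *: row i B.
  by rewrite mulmx_sum_row; apply: eq_bigr => i _; rewrite mxE.
by rewrite E -hz addrC subrK.
Qed.

Lemma vtxB a b : vtx a - vtx b = (zr a - zr b) *m B.
Proof. by rewrite (vtxE a) (vtxE b) mulmxBl opprD addrACA subrr add0r. Qed.

Lemma zr_inj a b : zr a *m B = zr b *m B -> zr a = zr b.
Proof. by move/(congr1 (mulmx^~ (invmx B))); rewrite !mulmxK. Qed.

Lemma zr_k0 : zr k0 = 0.
Proof.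
have : zr k0 *m B = 0.
  by apply/eqP; have := vtxE k0 => /eqP; rewrite addrC -subr_eq subrr eq_sym.
by move/(congr1 (mulmx^~ (invmx B))); rewrite mulmxK // mul0mx.
Qed.

Definition Qf (d : 'M[R]_m) (b : 'I_m -> int) : R :=
  \sum_u \sum_v (b u * b v)%:~R * d u v.

Lemma QfD d1 d2 b : Qf (d1 + d2) b = Qf d1 b + Qf d2 b.
Proof.
rewrite /Qf -big_split; apply: eq_bigr => u _; rewrite -big_split.
by apply: eq_bigr => v _; rewrite mxE mulrDr.
Qed.
Lemma QfZ a d b : Qf (a *: d) b = a * Qf d b.
Proof.
rewrite /Qf mulr_sumr; apply: eq_bigr => u _; rewrite mulr_sumr.
by apply: eq_bigr => v _; rewrite mxE; ring.
Qed.

Definition Yorth (h : 'I_m -> R) := forall y, inY vtx y -> \sum_k (y k)%:~R * h k = 0.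

Definition Zi : 'M[int]_n := \matrix_(i, j) (z (f (lift ord0 i)) j - z (f ord0) j).
Definition Zr : 'M[R]_n := map_mx (intr : int -> R) Zi.

Lemma Zr_row i : row i Zr = zr (f (lift ord0 i)) - zr (f ord0).
Proof. by apply/rowP => j; rewrite !mxE rmorphB. Qed.

Lemma hfZ : \matrix_(i < n) (vtx (f (lift ord0 i)) - vtx (f ord0)) = Zr *m B.
Proof. by apply/row_matrixP => i; rewrite row_mul rowK Zr_row vtxB. Qed.

Lemma ZrU : Zr \in unitmx.
Proof. by move: hf; rewrite hfZ unitmx_mul => /andP[]. Qed.

Definition Delta : int := \det Zi.
Lemma DeltaE : (Delta%:~R : R) = \det Zr.
Proof. by rewrite /Zr det_map_mx. Qed.
Lemma Delta_neq0 : (Delta%:~R : R) != 0.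
Proof. by rewrite DeltaE -unitfE -unitmxE ZrU. Qed.

Definition dz w : 'rV[int]_n := \row_j (z w j - z (f ord0) j).
Definition mu w : 'rV[int]_n := dz w *m \adj Zi.

Lemma muE w : map_mx (intr : int -> R) (mu w) = (zr w - zr (f ord0)) *m \adj Zr.
Proof.
rewrite /mu map_mxM /Zr map_mx_adj; congr (_ *m _).
by apply/rowP => j; rewrite !mxE rmorphB.
Qed.

Definition yv w (v : 'I_m) : int := Delta * (v == w)%:Z - Delta * (v == f ord0)%:Z
  - \sum_i mu w 0 i * ((v == f (lift ord0 i))%:Z - (v == f ord0)%:Z).

Lemma sum_delta (V : lmodType R) (p : 'I_m -> V) a :
  \sum_v ((v == a)%:Z)%:~R *: p v = p a.
Proof.
rewrite (bigD1 a) //= eqxx scale1r big1 ?addr0 // => v /negPf ->.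
by rewrite scale0r.
Qed.

Lemma ysum (V : lmodType R) (p : 'I_m -> V) w :
  \sum_v (yv w v)%:~R *: p v = (Delta%:~R : R) *: (p w - p (f ord0))
    - \sum_i ((mu w 0 i)%:~R : R) *: (p (f (lift ord0 i)) - p (f ord0)).
Proof.
rewrite /yv.
under eq_bigr do rewrite !rmorphB /= rmorph_sum !rmorphM /= !scalerBl
   scaler_suml -!scalerA.
rewrite !sumrB -!scaler_sumr !sum_delta scalerBr; congr (_ - _).
rewrite exchange_big /=; apply: eq_bigr => i _.
under eq_bigr do rewrite rmorphM rmorphB /= -scalerA scalerBl.
by rewrite -scaler_sumr sumrB !sum_delta.
Qed.

Lemma inY_yv w : inY vtx (yv w).
Proof.
split.
  rewrite ysum vtxB.
  have -> : \sum_i ((mu w 0 i)%:~R : R) *: (vtx (f (lift ord0 i)) - vtx (f ord0))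
     = map_mx (intr : int -> R) (mu w) *m (Zr *m B).
    by rewrite mulmx_sum_row; apply: eq_bigr => i _; rewrite row_mul Zr_row -vtxB [in RHS]mxE.
  rewrite muE mulmxA -(mulmxA _ (\adj Zr)) mul_adj_mx -DeltaE mul_mx_scalar.
  by rewrite -scalemxAl subrr.
have := ysum ('M[R]_1) (fun _ => 1%:M) w.
rewrite subrr scaler0.
under [in RHS]eq_bigr do rewrite scaler0.
rewrite big1_eq subr0.
rewrite -scaler_suml -rmorph_sum => /matrixP /(_ 0 0); rewrite !mxE eqxx mulr1.
by move/eqP; rewrite intr_eq0 => /eqP.
Qed.

Definition cv (h : 'I_m -> R) : 'cV[R]_n := \col_i (h (f (lift ord0 i)) - h (f ord0)).
Definition gam h := invmx Zr *m cv h.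

Lemma interp h : Yorth h -> forall w,
  h w = h (f ord0) + ((zr w - zr (f ord0)) *m gam h) 0 0.
Proof.
move=> Yh w; have := Yh _ (inY_yv w).
have -> : \sum_k ((yv w k)%:~R : R) * h k = \sum_k (yv w k)%:~R *: (h k : R^o) by [].
rewrite ysum => /eqP; rewrite subr_eq0 => /eqP E.
have E2 : (Delta%:~R : R) * (h w - h (f ord0)) =
    ((zr w - zr (f ord0)) *m \adj Zr *m cv h) 0 0.
  rewrite [LHS]E -muE mxE; apply: eq_bigr => i _; by rewrite !mxE.
rewrite /gam /invmx ZrU -DeltaE mulmxA -scalemxAr -scalemxAl mxE -E2.
by rewrite mulKf ?Delta_neq0 // addrC subrK.
Qed.

Definition Phi (M : 'M[R]_n) : 'M[R]_m :=
  \matrix_(u, v) Bf M (zr u - zr v) (zr u - zr v).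

Lemma Phi_tr M : (Phi M)^T = Phi M.
Proof.
apply/matrixP => u v; rewrite !mxE -opprB BfNl BfNr opprK //.
Qed.

Lemma Phi_diag M u : Phi M u u = 0.
Proof. by rewrite mxE subrr Bf0l. Qed.

Lemma Phi_lin a M1 M2 : Phi (a *: M1 + M2) = a *: Phi M1 + Phi M2.
Proof. by apply/matrixP => u v; rewrite !mxE BfMD BfMZ. Qed.

Lemma Phi0 : Phi 0 = 0.
Proof. by apply/matrixP => u v; rewrite !mxE /Bf mulmx0 mul0mx mxE. Qed.

Lemma Phi_sum (I : finType) (a : I -> R) (Ms : I -> 'M[R]_n) :
  Phi (\sum_i a i *: Ms i) = \sum_i a i *: Phi (Ms i).
Proof.
elim/big_rec2: _ => [|i s1 s2 _ <-]; first exact: Phi0.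
by rewrite Phi_lin.
Qed.

Definition dP := distP vtx.

Lemma dP_tr : dP^T = dP.
Proof.
apply/matrixP => u v; rewrite !mxE /sqnorm; apply: eq_bigr => i _.
by rewrite -opprB mxE sqrrN.
Qed.

Lemma dP_diag u : dP u u = 0.
Proof. by rewrite mxE subrr /sqnorm big1 // => i _; rewrite mxE expr0n. Qed.

Lemma sum_b1 (b : 'I_m -> int) : \sum_u b u = 1 -> \sum_u ((b u)%:~R : R) = 1.
Proof. by move=> h; rewrite -rmorph_sum h. Qed.

Lemma vert_r u : sqnorm (vtx u - c) = r ^+ 2.
Proof. by have [_ ->] := (proj2 (hvert (vtx u))) (ex_intro _ u erefl). Qed.

Lemma Qf_dP b : \sum_u b u = 1 ->
  Qf dP b = 2 * r ^+ 2 - 2 * sqnorm (\sum_u (b u)%:~R *: vtx u - c).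
Proof.
move=> hb.
have E : Qf dP b = \sum_u \sum_v ((b u)%:~R * (b v)%:~R) *
   Bf 1%:M ((vtx u - c) - (vtx v - c)) ((vtx u - c) - (vtx v - c)).
  apply: eq_bigr => u _; apply: eq_bigr => v _.
  by rewrite mxE rmorphM /= sqnormBf opprB addrA subrK.
rewrite E quad_sum ?trmx1 // sum_b1 //.
under eq_bigr do rewrite -sqnormBf vert_r.
rewrite -mulr_suml sum_b1 // mul1r mulr1 -sqnormBf.
under [in X in sqnorm X]eq_bigr do rewrite scalerBr.
by rewrite sumrB -scaler_suml sum_b1 // scale1r.
Qed.

Definition rowi (zi : 'I_n -> int) : 'rV[R]_n := \row_i (zi i)%:~R.
Definition zeta (b : 'I_m -> int) : 'rV[R]_n := \sum_u (b u)%:~R *: zr u.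

Lemma zetaE b : zeta b = rowi (fun i => \sum_u b u * z u i).
Proof.
apply/rowP => i; rewrite !mxE summxE rmorph_sum; apply: eq_bigr => u _.
by rewrite !mxE rmorphM.
Qed.

Lemma sum_vtx b : \sum_u b u = 1 ->
  \sum_u ((b u)%:~R : R) *: vtx u = vtx k0 + zeta b *m B.
Proof.
move=> hb.
under eq_bigr do rewrite vtxE scalerDr.
rewrite big_split /= -scaler_suml sum_b1 // scale1r; congr (_ + _).
by rewrite /zeta mulmx_suml; apply: eq_bigr => u _; rewrite scalemxAl.
Qed.

Lemma latt zi : lattice B (vtx k0 + rowi zi *m B).
Proof.
have [[zk Ek] _] := (proj2 (hvert (vtx k0))) (ex_intro _ k0 erefl).
exists (fun i => zk i + zi i).
rewrite Ek mulmx_sum_row -big_split /=; apply: eq_bigr => i _.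
by rewrite mxE rmorphD scalerDl.
Qed.

Definition hh (x : 'rV[R]_n) : R := sqnorm (vtx k0 + x *m B - c) - r ^+ 2.

Lemma Qf_dP_hh b : \sum_u b u = 1 -> Qf dP b = - 2 * hh (zeta b).
Proof. by move=> hb; rewrite Qf_dP // sum_vtx // /hh; ring. Qed.

Lemma hh_ge0 zi : 0 <= hh (rowi zi).
Proof. by rewrite /hh subr_ge0; apply: hempty; apply: latt. Qed.

Lemma hh_eq0 zi : hh (rowi zi) = 0 -> exists w, rowi zi = zr w.
Proof.
move/eqP; rewrite subr_eq0 => /eqP h.
have [w Ew] := (hvert (vtx k0 + rowi zi *m B)).1 (conj (latt zi) h).
exists w; move: Ew; rewrite vtxE => /addrI Ew.
by move/(congr1 (mulmx^~ (invmx B))): Ew; rewrite !mulmxK.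
Qed.

Lemma hyp_dP : hyp dP.
Proof.
split; [exact: dP_tr | exact: dP_diag |].
move=> b hb; rewrite -/(Qf dP b) Qf_dP_hh // zetaE.
have := hh_ge0 (fun i => \sum_u b u * z u i); lra.
Qed.

Definition bw w (y : 'I_m -> int) v : int := (v == w)%:Z + y v.

Definition FT (x : 'M[R]_m) : Prop :=
  hyp x /\ forall w y, inY vtx y -> Qf x (bw w y) = 0.

Lemma inY_opp y : inY vtx y -> inY vtx (fun v => - y v).
Proof.
case=> h1 h2; split; last by rewrite sumrN h2 oppr0.
under eq_bigr do rewrite rmorphN scaleNr.
by rewrite sumrN h1 oppr0.
Qed.

Lemma sumdR (F : 'I_m -> R) w : \sum_u ((u == w)%:Z)%:~R * F u = F w.
Proof.
rewrite (bigD1 w) //= eqxx mul1r big1 ?addr0 // => u /negPf ->.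
by rewrite mul0r.
Qed.

Lemma sum_bw w y : inY vtx y -> \sum_v bw w y v = 1.
Proof.
case=> _ h2; rewrite /bw big_split /= h2 addr0 (bigD1 w) //= eqxx big1 ?addr0 //.
by move=> u /negPf ->.
Qed.

Lemma Qf_expand x w y : x^T = x -> (forall u, x u u = 0) ->
  Qf x (bw w y) = 2 * \sum_v (y v)%:~R * x w v + Qf x y.
Proof.
move=> sx dx; rewrite /Qf /bw.
have sx' : forall u v, x u v = x v u.
  by move=> u v; rewrite -[in LHS]sx mxE.
transitivity (
  \sum_u \sum_v ((u == w)%:Z)%:~R * (((v == w)%:Z)%:~R * x u v)
+ \sum_u \sum_v ((u == w)%:Z)%:~R * ((y v)%:~R * x u v)
+ \sum_u \sum_v (y u)%:~R * (((v == w)%:Z)%:~R * x u v)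
+ \sum_u \sum_v (y u)%:~R * ((y v)%:~R * x u v)).
  rewrite -!big_split; apply: eq_bigr => u _; rewrite -!big_split.
  by apply: eq_bigr => v _ /=; rewrite rmorphM !rmorphD /=; ring.
have S1 : \sum_u \sum_v ((u == w)%:Z)%:~R * (((v == w)%:Z)%:~R * x u v) = 0 :> R.
  by under eq_bigr do rewrite -mulr_sumr; rewrite sumdR sumdR dx.
have S2 : \sum_u \sum_v ((u == w)%:Z)%:~R * ((y v)%:~R * x u v) =
    \sum_v (y v)%:~R * x w v :> R.
  by under eq_bigr do rewrite -mulr_sumr; rewrite sumdR.
have S3 : \sum_u \sum_v (y u)%:~R * (((v == w)%:Z)%:~R * x u v) =
    \sum_v (y v)%:~R * x w v :> R.
  by apply: eq_bigr => u _; rewrite -mulr_sumr sumdR sx'.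
rewrite S1 S2 S3 add0r.
have -> : \sum_u \sum_v ((y u)%:~R * ((y v)%:~R * x u v)) =
   \sum_u \sum_v (y u * y v)%:~R * x u v.
  by apply: eq_bigr => u _; apply: eq_bigr => v _; rewrite rmorphM mulrA.
ring.
Qed.

Lemma hyp_comb (x y : 'M[R]_m) (t : R) : hyp x -> hyp y -> 0 <= t <= 1 ->
  hyp (t *: x + (1 - t) *: y).
Proof.
case=> tx dx qx [ty dy qy] /andP[t0 t1]; split.
- by rewrite linearD !linearZ /= tx ty.
- by move=> u; rewrite !mxE dx dy !mulr0 addr0.
- move=> b hb; rewrite -/(Qf _ b) QfD !QfZ.
  have := qx b hb; have := qy b hb; rewrite -/(Qf _ b) -/(Qf _ b) => h1 h2.
  have := mulr_ge0_le0 t0 h2; have : 0 <= 1 - t by lra.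
  move/mulr_ge0_le0 => /(_ _ h1); lra.
Qed.

Lemma FT_face : is_face (@hyp R m) FT.
Proof.
split.
- by move=> x [].
- move=> x y t [hx qx] [hy qy] ht; split; first exact: hyp_comb.
  by move=> w yy hyy; rewrite QfD !QfZ qx // qy // !mulr0 addr0.
- move=> x y t hx hy /andP[t0 t1] [_ hq].
  have key : forall w yy, inY vtx yy -> Qf x (bw w yy) = 0 /\ Qf y (bw w yy) = 0.
    move=> w yy hyy; have := hq w yy hyy; rewrite QfD !QfZ.
    have h1 : Qf x (bw w yy) <= 0 by case: hx => _ _ /(_ _ (sum_bw w yy hyy)).
    have h2 : Qf y (bw w yy) <= 0 by case: hy => _ _ /(_ _ (sum_bw w yy hyy)).
    move=> hs.
    have e1 : t * Qf x (bw w yy) <= 0 by apply: mulr_ge0_le0 => //; lra.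
    have e2 : (1 - t) * Qf y (bw w yy) <= 0 by apply: mulr_ge0_le0 => //; lra.
    have f1 : t * Qf x (bw w yy) = 0 by lra.
    have f2 : (1 - t) * Qf y (bw w yy) = 0 by lra.
    split.
      by move/eqP: f1; rewrite mulf_eq0 => /orP[/eqP|/eqP] //; lra.
    by move/eqP: f2; rewrite mulf_eq0 => /orP[/eqP|/eqP] //; lra.
  split; split => //.
    by move=> w yy hyy; case: (key w yy hyy).
  by move=> w yy hyy; case: (key w yy hyy).
Qed.

Lemma FT_dP : FT dP.
Proof.
split; first exact: hyp_dP.
move=> w y hy; rewrite Qf_dP ?sum_bw //.
have -> : \sum_u ((bw w y u)%:~R : R) *: vtx u = vtx w.
  under eq_bigr do rewrite rmorphD scalerDl.
  by rewrite big_split /= sum_delta (proj1 hy) addr0.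
by rewrite vert_r subrr.
Qed.

Lemma FT_rows x : FT x -> forall w, Yorth (fun v => x w v).
Proof.
case=> [[tx dx _] hq] w y hy.
have e1 := hq w y hy; have e2 := hq w _ (inY_opp y hy).
rewrite Qf_expand // in e1; rewrite Qf_expand // in e2.
have : Qf x (fun v => - y v) = Qf x y.
  by apply: eq_bigr => u _; apply: eq_bigr => v _; rewrite mulrNN.
move=> e3; rewrite e3 in e2.
have : \sum_v ((- y v)%:~R : R) * x w v = - \sum_v (y v)%:~R * x w v.
  by rewrite -sumrN; apply: eq_bigr => v _; rewrite rmorphN mulNr.
move=> e4; rewrite e4 in e2; lra.
Qed.

Lemma Yorth_ext h1 h2 : (forall w, h1 w = h2 w) -> Yorth h1 -> Yorth h2.
Proof.
move=> e h y hy; rewrite -[RHS](h y hy); apply: eq_bigr => k _; by rewrite e.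
Qed.

Lemma Yorth_lin (F : 'I_n -> 'I_m -> R) (a : 'I_n -> R) :
  (forall i, Yorth (F i)) -> Yorth (fun w => \sum_i a i * F i w).
Proof.
move=> h y hy; under eq_bigr do rewrite mulr_sumr.
rewrite exchange_big big1 // => i _ /=.
rewrite -[RHS](mulr0 (a i)) -[X in _ * X](h i y hy) mulr_sumr.
by apply: eq_bigr => k _; ring.
Qed.

Lemma Yorth_B h1 h2 : Yorth h1 -> Yorth h2 -> Yorth (fun w => h1 w - h2 w).
Proof.
move=> e1 e2 y hy; under eq_bigr do rewrite mulrBr.
by rewrite sumrB e1 // e2 // subrr.
Qed.

Lemma x_struct x : FT x ->
  exists M, [/\ M^T = M, Yorth (fun k => Bf M (zr k) (zr k)) & x = Phi M].
Proof.
move=> hx; have [[tx dx _] _] := hx; have Yr := FT_rows _ hx.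
have sx' : forall u v, x u v = x v u by move=> u v; rewrite -[in LHS]tx mxE.
pose e := f ord0.
pose d v := zr v - zr e.
pose G w := gam (fun v => x w v).
have rowI : forall w v, x w v = x w e + (d v *m G w) 0 0.
  by move=> w v; exact: (interp _ (Yr w) v).
have YG : forall j, Yorth (fun w => G w j 0).
  move=> j.
  apply: (@Yorth_ext (fun w => \sum_i invmx Zr j i * (x (f (lift ord0 i)) w - x e w))).
    move=> w; rewrite /G /gam !mxE; apply: eq_bigr => i _.
    by rewrite mxE (sx' (f _) w) (sx' e w).
  apply: Yorth_lin => i; apply: Yorth_B; exact: Yr.
pose P : 'M[R]_n := \matrix_(j, l) gam (fun w => G w j 0) l 0.
pose lin (v : 'rV[R]_n) := (v *m G e) 0 0.
pose a := x e e.
have form : forall w v, x w v = a + lin (d w) + lin (d v) + Bf P (d v) (d w).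
  move=> w v; rewrite rowI sx' (rowI e w) -/a.
  have E1 : (d v *m G w) 0 0 = lin (d v) + Bf P (d v) (d w).
    rewrite mxE /lin mxE BfE -big_split; apply: eq_bigr => j _ /=.
    have := interp _ (YG j) w; rewrite /= => ->.
    rewrite mulrDr [((_ *m gam _) 0 0)]mxE mulr_sumr; congr (_ + _).
    by apply: eq_bigr => l _; rewrite [P j l]mxE /d /e; ring.
  by rewrite E1 addrA.
pose M : 'M[R]_n := (- (1/4)) *: (P + P^T).
have sM : M^T = M by rewrite /M linearZ linearD /= trmxK addrC.
have BM : forall p q, Bf M p q = - (1/4) * (Bf P p q + Bf P q p).
  by move=> p q; rewrite /M BfMZ BfMD Bf_trM.
have xPhi : x = Phi M.
  apply/matrixP => u v; rewrite mxE.
  have -> : zr u - zr v = d u - d v by rewrite /d opprB addrA subrK.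
  have f1 := form u u; have f2 := form v v; have f3 := form u v; have f4 := form v u.
  rewrite dx in f1; rewrite dx in f2; rewrite sx' in f4.
  move: f1 f2 f3 f4; move: (d u) (d v) => p q f1 f2 f3 f4.
  rewrite BM !BfBl !BfBr.
  lra.
exists M; split => //.
apply: (@Yorth_ext (fun k => x k0 k)); last exact: Yr.
by move=> k; rewrite sx' xPhi mxE zr_k0 subr0.
Qed.

Lemma BspaceE (M : 'M[R]_n) (y : 'I_m -> int) :
  \sum_i \sum_j (\sum_k (y k * z k i * z k j)%:~R) * M i j =
  \sum_k (y k)%:~R * Bf M (zr k) (zr k).
Proof.
transitivity (\sum_i \sum_j \sum_k (y k)%:~R * (zr k 0 i * M i j * zr k 0 j)).
  apply: eq_bigr => i _; apply: eq_bigr => j _; rewrite mulr_suml.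
  by apply: eq_bigr => k _; rewrite !mxE !rmorphM; ring.
under eq_bigr do rewrite exchange_big /=.
rewrite exchange_big /=; apply: eq_bigr => k _.
rewrite BfE mulr_sumr; apply: eq_bigr => i _; by rewrite mulr_sumr.
Qed.

Section PhiM.
Variable M : 'M[R]_n.
Hypothesis sM : M^T = M.
Hypothesis YM : Yorth (fun k => Bf M (zr k) (zr k)).

Let e := f ord0.
Local Notation q k := (Bf M (zr k) (zr k)).
Local Notation ga := (gam (fun k => Bf M (zr k) (zr k))).
Definition gM (x : 'rV[R]_n) : R := q e + ((x - zr e) *m ga) 0 0 - Bf M x x.

Lemma Qf_Phi b : \sum_u b u = 1 -> Qf (Phi M) b = 2 * gM (zeta b).
Proof.
move=> hb.
have E : Qf (Phi M) b = \sum_u \sum_v ((b u)%:~R * (b v)%:~R) *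
   Bf M (zr u - zr v) (zr u - zr v).
  by apply: eq_bigr => u _; apply: eq_bigr => v _; rewrite mxE rmorphM.
rewrite E quad_sum // sum_b1 // mulr1.
have -> : \sum_u (b u)%:~R * Bf M (zr u) (zr u) =
    q e + ((zeta b - zr e) *m ga) 0 0.
  under eq_bigr do rewrite (interp _ YM) mulrDr.
  rewrite big_split /= -mulr_suml sum_b1 // mul1r; congr (_ + _).
  have -> : zeta b - zr e = \sum_u (b u)%:~R *: (zr u - zr e).
    under [RHS]eq_bigr do rewrite scalerBr.
    by rewrite sumrB -scaler_suml sum_b1 // scale1r.
  rewrite mulmx_suml summxE; apply: eq_bigr => u _.
  by rewrite -scalemxAl [RHS]mxE.
by rewrite /gM /zeta; ring.
Qed.

Lemma gM_bound : exists Cg, forall x, `|gM x| <= Cg * (1 + sqnorm x).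
Proof.
pose A := \sum_j `|ga j 0|.
pose Q := \sum_i \sum_j `|M i j|.
exists (`|q e| + `|(zr e *m ga) 0 0| + A + Q) => x.
have A0 : 0 <= A by apply: sumr_ge0 => j _.
have Q0 : 0 <= Q by apply: sumr_ge0 => i _; apply: sumr_ge0.
have S0 := sqnorm_ge0 x.
have h1 := lin_bound ga x; have h2 := quad_bound M x.
rewrite -/A in h1; rewrite -/Q in h2.
have E : gM x = q e + (x *m ga) 0 0 - (zr e *m ga) 0 0 - Bf M x x.
  have E0 : ((x - zr e) *m ga) 0 0 = (x *m ga) 0 0 - (zr e *m ga) 0 0.
    by rewrite mulmxBl !mxE.
  by rewrite /gM E0; ring.
rewrite E.
have n1 := normr_ge0 (q e); have n2 := normr_ge0 ((zr e *m ga) 0 0).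
have t1 := ler_normD (q e + (x *m ga) 0 0 - (zr e *m ga) 0 0) (- Bf M x x).
have t2 := ler_normD (q e + (x *m ga) 0 0) (- (zr e *m ga) 0 0).
have t3 := ler_normD (q e) ((x *m ga) 0 0).
rewrite !normrN in t1 t2.
nra.
Qed.

Lemma gM_zero zi : hh (rowi zi) = 0 -> gM (rowi zi) = 0.
Proof.
move=> /hh_eq0 [w ->]; rewrite /gM.
have := interp _ YM w; rewrite /= => E.
by rewrite [X in _ - X]E subrr.
Qed.

End PhiM.

Lemma hh_bound : exists Ch, forall zi, sqnorm (rowi zi) <= Ch * (1 + hh (rowi zi)).
Proof.
pose N : 'M[R]_n := invmx B *m 1%:M *m (invmx B)^T.
pose CN := \sum_i \sum_j `|N i j|.
pose e0 := vtx k0 - c.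
have CN0 : 0 <= CN by apply: sumr_ge0 => i _; apply: sumr_ge0.
exists (CN * (2 + 2 * r ^+ 2 + 2 * sqnorm e0)) => zi.
set x := rowi zi.
have h0 := hh_ge0 zi; rewrite -/x in h0.
have s1 : sqnorm x <= CN * sqnorm (x *m B).
  rewrite sqnormBf -{1 2}(mulmxK hB x) Bf_mul -/N.
  apply: le_trans (ler_norm _) _; exact: quad_bound.
have s2 : sqnorm (x *m B) <= 2 * sqnorm (vtx k0 + x *m B - c) + 2 * sqnorm e0.
  have E : x *m B = (vtx k0 + x *m B - c) - e0.
    by rewrite /e0 opprB addrA subrK addrC addKr.
  rewrite {1}E; exact: sqnormB_le.
have s3 : sqnorm (vtx k0 + x *m B - c) = hh x + r ^+ 2 by rewrite /hh subrK.
rewrite s3 in s2.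
have se0 := sqnorm_ge0 e0; have r0 := sqr_ge0 r.
have := ler_wpM2l CN0 s2 => s4.
have p1 := mulr_ge0 CN0 h0.
have p2 := mulr_ge0 (mulr_ge0 CN0 r0) h0.
have p3 := mulr_ge0 (mulr_ge0 CN0 se0) h0.
nra.
Qed.

Lemma Phi_eps M : M^T = M -> Yorth (fun k => Bf M (zr k) (zr k)) ->
  exists2 eps, 0 < eps & forall s, `|s| <= eps -> hyp (dP + s *: Phi M).
Proof.
move=> sM YM.
have [Cg hCg] := gM_bound M.
have [Ch hCh] := hh_bound.
have [eps e0 heps] := fin_bound (gM M) hh Cg Ch (fun zi => hCg _) hh_ge0
  (gM_zero M YM) hCh.
exists eps => // s hs; split.
- by rewrite linearD linearZ /= dP_tr Phi_tr.
- move=> u; have E : forall (A : 'M[R]_m) a, (a *: A) u u = a * A u u by move=> A a; rewrite mxE.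
  by rewrite mxE E dP_diag Phi_diag mulr0 addr0.
- move=> b hb; rewrite -/(Qf _ b) QfD QfZ Qf_dP_hh // Qf_Phi // zetaE.
  set zi := (fun i => _).
  have h1 := heps zi; have h0 := hh_ge0 zi.
  set G := gM M (rowi zi) in h1 *; set H := hh (rowi zi) in h1 h0 *.
  have a1 : s * G <= `|s| * `|G| by rewrite -normrM; exact: ler_norm.
  have a2 : `|s| * `|G| <= eps * `|G| by apply: ler_wpM2r.
  change (- 2 * H + s * (2 * G) <= 0).
  lra.
Qed.



Lemma Bf_rows (M A : 'M[R]_n) i j : Bf M (row i A) (row j A) = (A *m M *m A^T) i j.
Proof.
rewrite /Bf -row_mul tr_row !mxE; apply: eq_bigr => k _; by rewrite !mxE.
Qed.

Lemma Phi_inj M : M^T = M -> Phi M = 0 -> M = 0.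
Proof.
move=> sM h0.
have P0 : forall u v, Bf M (zr u - zr v) (zr u - zr v) = 0.
  by move=> u v; move/matrixP: h0 => /(_ u v); rewrite !mxE.
have key : forall i j, Bf M (row i Zr) (row j Zr) = 0.
  move=> i j.
  have a1 := P0 (f (lift ord0 i)) (f ord0); have a2 := P0 (f (lift ord0 j)) (f ord0).
  have a3 := P0 (f (lift ord0 i)) (f (lift ord0 j)).
  rewrite -!Zr_row in a1 a2.
  have : zr (f (lift ord0 i)) - zr (f (lift ord0 j)) = row i Zr - row j Zr.
    by rewrite !Zr_row opprB addrA subrK.
  move=> E; rewrite E BfBB // in a3; lra.
have Z0 : Zr *m M *m Zr^T = 0.
  by apply/matrixP => i j; rewrite -Bf_rows key mxE.
have ZT : Zr^T \in unitmx by rewrite unitmx_tr ZrU.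
rewrite -(mulKmx ZrU M) -(mulmxK ZT (Zr *m M)) Z0.
by rewrite mul0mx mulmx0.
Qed.

Lemma BspaceP M : Bspace vtx z M <-> M^T = M /\ Yorth (fun k => Bf M (zr k) (zr k)).
Proof.
split; case=> h1 h2; split=> // y hy; have := h2 y hy; by rewrite BspaceE.
Qed.

Lemma mf_sub x : min_face (@hyp R m) dP x -> exists M, Bspace vtx z M /\ x = Phi M.
Proof.
move=> hx; have hFT : FT x by apply: hx; [exact: FT_face | exact: FT_dP].
have [M [sM YM ->]] := x_struct x hFT.
by exists M; split => //; apply/BspaceP.
Qed.

Lemma mf_dP : min_face (@hyp R m) dP dP.
Proof. by move=> F _. Qed.

Lemma mf_Phi M : Bspace vtx z M ->
  exists2 eps, 0 < eps & min_face (@hyp R m) dP (dP + eps *: Phi M).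
Proof.
move=> /BspaceP [sM YM]; have [eps e0 he] := Phi_eps M sM YM.
exists eps => // F [FC Fconv Fext] FdP.
have h1 : hyp (dP + eps *: Phi M) by apply: he; rewrite ger0_norm // ltW.
have h2 : hyp (dP + (- eps) *: Phi M) by apply: he; rewrite normrN ger0_norm // ltW.
have ht : (0 < (1/2 : R)) && ((1/2 : R) < 1).
  by apply/andP; split; lra.
have E : (1/2 : R) *: (dP + eps *: Phi M) + (1 - 1/2) *: (dP + (- eps) *: Phi M) = dP.
  apply/matrixP => u v; by rewrite !mxE; field.
have := Fext _ _ _ h1 h2 ht; rewrite E => /(_ FdP); by case.
Qed.

Lemma main_dim : exists k, is_dim (Bspace vtx z) k /\ is_dim (min_face (@hyp R m) dP) k.
Proof.
have [s [sS fs smax sspan]] := @maxfree R _ (Bspace vtx z).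
have [t [tS ft tmax tspan]] := @maxfree R _ (min_face (@hyp R m) dP).
exists (size s); split; first by split => //; exists s.
suff -> : size s = size t by split => //; exists t.
have Phi_s : forall M, M \in <<s>>%VS -> Phi M \in <<map Phi s>>%VS.
  move=> M hM; rewrite (coord_span (X := in_tuple s) hM) Phi_sum.
  apply: memv_suml => i _; apply: memvZ; apply: memv_span.
  by apply: map_f; apply: mem_nth.
have Phi_t : forall M, Bspace vtx z M -> Phi M \in <<t>>%VS.
  move=> M hM; have [eps e0 he] := mf_Phi M hM.
  have h1 := tspan _ he; have h2 := tspan _ mf_dP.
  have -> : Phi M = eps^-1 *: ((dP + eps *: Phi M) - dP).
    by rewrite addrC addKr scalerA mulVf ?scale1r // gt_eqF.
  by apply: memvZ; apply: memvB.
have symS : forall M, M \in s -> M^T = M by move=> M /sS /BspaceP [].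
apply/eqP; rewrite eqn_leq; apply/andP; split.
  have fPs : free (map Phi s).
    apply/(@freeP _ _ _ (map_tuple Phi (in_tuple s))) => k hk i.
    have hk' : Phi (\sum_i k i *: (in_tuple s)`_i) = 0.
      rewrite Phi_sum -[RHS]hk; apply: eq_bigr => j _.
      by rewrite /= (nth_map 0) // size_tuple.
    have sym : (\sum_i k i *: (in_tuple s)`_i)^T = \sum_i k i *: (in_tuple s)`_i.
      rewrite linear_sum; apply: eq_bigr => j _; rewrite linearZ /= symS //.
      by apply: mem_nth; exact: ltn_ord.
    move/(@freeP _ _ _ (in_tuple s)): fs => fs; exact: (fs k (Phi_inj _ sym hk') i).
  rewrite -(size_map Phi) -(eqP fPs).
  apply: (leq_trans (dimvS _) (dim_span t)); apply/span_subvP => v.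
  by move=> /mapP [M /sS hM ->]; apply: Phi_t.
rewrite -(eqP ft) -(size_map Phi s).
apply: (leq_trans (dimvS _) (dim_span (map Phi s))); apply/span_subvP => v.
move=> /tS /mf_sub [M [hM ->]]; apply: Phi_s; exact: sspan.
Qed.

End Main.

Theorem mainTheorem2 (R : realType) (n : nat) (B : 'M[R]_n) (m : nat)
    (vtx : 'I_m -> 'rV[R]_n) (k0 : 'I_m) (z : 'I_m -> 'I_n -> int) :
  B \in unitmx ->
  is_delaunay B vtx ->
  generates B vtx ->
  (forall k, vtx k - vtx k0 = \sum_(i < n) (z k i)%:~R *: row i B) ->
  exists k : nat,
    is_dim (Bspace vtx z) k /\ is_dim (min_face (@hyp R m) (distP vtx)) k.
Proof.
move=> hB [_ [c [r [hempty hvert [f hf]]]]] _ hz.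
exact: (@main_dim R n m B vtx k0 z hB hz c r f hempty hvert hf).
Qed.
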